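(* ($I\Sigma_1$) Let $X\subseteq\mathbb{N}$ be finite, $\omega^{n+1}$-large and $\omega^3$-sparse, and let $c\in\mathbb{N}$ satisfy $4^{c^2}\le\min X$. Then: (1) for every finite $\bar X\subseteq\mathbb{N}$ with $|\bar X|\le c$ and $\max\bar X<\min X$, and every coloring $P:[\bar X\cup X]^2\to\{0,\dots,c-1\}$, there is an $\omega^n$-large $Y\subseteq X$ such that $P(x,y)=P(x,y')$ for all $x\in\bar X$ and $y,y'\in Y$; (2) for every finite $\bar X\subseteq\mathbb{N}$ with $|\bar X|\le c$ and $\max X<\min\bar X$, and every coloring $P:[X\cup\bar X]^2\to\{0,\dots,c-1\}$, there is an $\omega^n$-large $Y\subseteq X$ such that $P(y,x)=P(y',x)$ for all $x\in\bar X$ and $y,y'\in Y$.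
   Context: $\alpha$-largeness for $\alpha<\omega^\omega$: writing ordinals in Cantor normal form, $0[m]=0$, $(\beta+1)[m]=\beta$, $(\beta+\omega^n)[m]=\beta+\omega^{n-1}\cdot m$ for $n\ge1$; a finite $\{x_0<\dots<x_{\ell-1}\}$ is $\alpha$-large if $\alpha[x_0]\cdots[x_{\ell-1}]=0$. $X$ is \emph{$\alpha$-sparse} if $\min X>3$ and for all $x<y$ in $X$ the interval $[x,y)$ is $\alpha$-large. *)

(* Defs.v *)
From mathcomp Require Import all_boot.
Set Implicit Arguments. Unset Strict Implicit. Unset Printing Implicit Defensive.

(* Ordinals below omega^omega in Cantor normal form:
   the list [:: e1; ...; ek] with e1 >= ... >= ek denotes
   omega^e1 + ... + omega^ek; [::] denotes 0. *)
Definition ord_ww := seq nat.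

Definition is_cnf (a : ord_ww) : bool := sorted geq a.

Definition omega_pow (n : nat) : ord_ww := [:: n].

(* fundamental sequence: 0[m] = 0, (b+1)[m] = b,
   (b + omega^(e+1))[m] = b + omega^e * m *)
Definition fund (a : ord_ww) (m : nat) : ord_ww :=
  match rev a with
  | [::] => [::]
  | 0 :: rb => rev rb
  | e.+1 :: rb => rev rb ++ nseq m e
  end.

(* a finite set {x0 < ... < x_{l-1}} is represented by its strictly
   increasing enumeration *)
Definition is_fin_set (s : seq nat) : bool := sorted ltn s.

Definition large (a : ord_ww) (s : seq nat) : bool :=
  foldl fund a s == [::].

Definition interval (x y : nat) : seq nat := iota x (y - x).

Definition sparse (a : ord_ww) (X : seq nat) : bool :=
  (3 < head 0 X) &&
  all (fun x => all (fun y => (x < y) ==> large a (interval x y)) X) X.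

(* Main.v *)
Require Import Defs.
From mathcomp Require Import all_boot zify.
Set Implicit Arguments. Unset Strict Implicit. Unset Printing Implicit Defensive.

Fixpoint SubG (P : nat -> seq nat -> Prop) (g d : seq nat) : Prop :=
  match g with
  | [::] => d = [::]
  | a :: g' => exists D d', [/\ perm_eq d (D ++ d'), P a D & SubG P g' d']
  end.

Fixpoint Des (K a : nat) (D : seq nat) {struct a} : Prop :=
  perm_eq D [:: a] \/
  match a with 0 => D = [::] | a'.+1 => SubG (fun _ => Des K a') (nseq K a') D end.

Definition ext (x y : nat) : seq nat := if x is e.+1 then nseq y e else [::].

Lemma perm_nil_eq (s : seq nat) : perm_eq s [::] -> s = [::].
Proof. by move/perm_nilP. Qed.

Lemma perm_rem2 (x : nat) (s t : seq nat) : perm_eq s t -> perm_eq (rem x s) (rem x t).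
Proof.
move=> st; case xs: (x \in s).
  have xt : x \in t by rewrite -(perm_mem st).
  have h1 := perm_to_rem xs; have h2 := perm_to_rem xt.
  have : perm_eq (x :: rem x s) (x :: rem x t).
    by apply: (perm_trans (perm_trans _ st) h2); rewrite perm_sym.
  by rewrite perm_cons.
have xt : x \notin t by rewrite -(perm_mem st) xs.
by rewrite !rem_id ?xs.
Qed.

Lemma SubG_nilP P g : (forall a, P a [::]) -> SubG P g [::].
Proof. move=> h; elim: g => //= a g IH; exists [::], [::]; split => //. Qed.

Lemma SubG_perm_r P g d d2 : perm_eq d d2 -> SubG P g d -> SubG P g d2.
Proof.
case: g => [|a g] /=.
  by move=> pd e; subst d; apply: perm_nil_eq; rewrite perm_sym.
move=> pd [D [d' [h1 h2 h3]]]; exists D, d'; split => //.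
by rewrite (perm_trans _ h1) // perm_sym.
Qed.

Lemma SubG_mono (P Q : nat -> seq nat -> Prop) g d :
  (forall a D, P a D -> Q a D) -> SubG P g d -> SubG Q g d.
Proof.
move=> h; elim: g d => [|a g IH] d //= [D [d' [h1 h2 h3]]].
exists D, d'; split => //; [exact: h | exact: IH].
Qed.

Lemma SubG_mono_in (P Q : nat -> seq nat -> Prop) g d :
  (forall a D, a \in g -> P a D -> Q a D) -> SubG P g d -> SubG Q g d.
Proof.
elim: g d => [|a g IH] d //= h [D [d' [h1 h2 h3]]].
exists D, d'; split => //.
  by apply: h => //; rewrite mem_head.
apply: (IH _ _ h3) => b E bg; by apply: h; rewrite inE bg orbT.
Qed.

Lemma SubG_cat P g1 g2 d1 d2 : SubG P g1 d1 -> SubG P g2 d2 -> SubG P (g1 ++ g2) (d1 ++ d2).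
Proof.
elim: g1 d1 => [|a g IH] d1 /=; first by move=> ->.
move=> [D [d' [h1 h2 h3]]] H2; exists D, (d' ++ d2); split => //; last exact: IH.
by rewrite catA perm_cat2r.
Qed.

Lemma SubG_swap P a b g d : SubG P (a :: b :: g) d -> SubG P (b :: a :: g) d.
Proof.
move=> [D1 [d1 [h1 h2 [D2 [d2 [h3 h4 h5]]]]]].
exists D2, (D1 ++ d2); split => //; last by exists D1, d2; split.
apply: (perm_trans h1); by rewrite perm_sym perm_catCA perm_cat2l perm_sym.
Qed.

Lemma SubG_rem_l P a g d : a \in g -> SubG P (a :: rem a g) d -> SubG P g d.
Proof.
elim: g d => [|b g IH] d //=; case: eqP => [-> _ //|ne].
rewrite inE; case/orP => [/eqP e|ag]; first by case: ne.
move/SubG_swap => [D [d' [h1 h2 h3]]]; exists D, d'; split => //; exact: IH.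
Qed.

Lemma SubG_perm_l P g g' d : perm_eq g g' -> SubG P g d -> SubG P g' d.
Proof.
elim: g g' d => [|a g IH] g' d /=.
  by move=> pg ->; move: pg; rewrite perm_sym => /perm_nil_eq ->.
move=> pg [D [d' [h1 h2 h3]]].
have ag : a \in g' by rewrite -(perm_mem pg) mem_head.
apply: (SubG_rem_l ag); exists D, d'; split => //; apply: IH h3.
have := perm_trans pg (perm_to_rem ag); by rewrite perm_cons.
Qed.

Lemma SubG_extract_r P g d x : SubG P g d -> x \in d ->
  exists a D gr dr, [/\ perm_eq g (a :: gr), perm_eq d (D ++ dr), P a D, x \in D & SubG P gr dr].
Proof.
elim: g d => [|b g IH] d /=; first by move=> ->.
move=> [D [d' [h1 h2 h3]]] xd.
have : x \in D ++ d' by rewrite -(perm_mem h1).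
rewrite mem_cat; case/orP => xD.
  by exists b, D, g, d'; split.
have [a [D2 [gr [dr [e1 e2 e3 e4 e5]]]]] := IH _ h3 xD.
exists a, D2, (b :: gr), (D ++ dr); split => //.
- have : perm_eq (b :: g) (b :: a :: gr) by rewrite perm_cons.
  move/perm_trans; apply.
  by rewrite -cat1s -[a :: gr]cat1s -[b :: _]cat1s perm_catCA.
- apply: (perm_trans h1).
  have : perm_eq (D ++ d') (D ++ (D2 ++ dr)) by rewrite perm_cat2l.
  move/perm_trans; apply; by rewrite perm_catCA.
- by exists D, dr; split.
Qed.

Lemma SubG_extract_l P g d a : SubG P g d -> a \in g ->
  exists D dr, [/\ perm_eq d (D ++ dr), P a D & SubG P (rem a g) dr].
Proof.
move=> h ag; have := SubG_perm_l (perm_to_rem ag) h.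
by move=> [D [dr [h1 h2 h3]]]; exists D, dr.
Qed.

Lemma Des_nil K a : Des K a [::].
Proof. elim: a => [|a IH] /=; right => //; exact: SubG_nilP. Qed.

Lemma SubG_pad P m m' b D : (forall a, P a [::]) -> m <= m' ->
  SubG P (nseq m b) D -> SubG P (nseq m' b) D.
Proof.
move=> h mm s; rewrite -(subnKC mm) nseqD -[D]cats0; apply: SubG_cat => //.
exact: SubG_nilP.
Qed.

Lemma Des_mono K K' a D : K <= K' -> Des K a D -> Des K' a D.
Proof.
move=> KK; elim: a D => [|a IH] D /=; first by [].
case=> [h|h]; [by left | right].
apply: SubG_pad KK _ => [?|]; first exact: Des_nil.
apply: SubG_mono h => _ E; exact: IH.
Qed.

Lemma Sub_mono K K' g d : K <= K' -> SubG (Des K) g d -> SubG (Des K') g d.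
Proof. move=> KK; apply: SubG_mono => a D; exact: Des_mono. Qed.

Lemma Sub_refl K s : SubG (Des K) s s.
Proof.
elim: s => [|a s IH] //=; exists [:: a], s; split => //.
by case: a => [|a] /=; left.
Qed.

Lemma SubG_nseq_conv K b m D :
  SubG (fun _ => Des K b) (nseq m b) D <-> SubG (Des K) (nseq m b) D.
Proof.
split; apply: SubG_mono_in => a E; rewrite mem_nseq => /andP [_ /eqP e]; by rewrite e.
Qed.

Lemma Des_single K a b : 0 < K -> b <= a -> Des K a [:: b].
Proof.
move=> K0; elim: a b => [|a IH] b; first by rewrite leqn0 => /eqP ->; left.
rewrite leq_eqVlt; case/orP => [/eqP ->|ba]; first by left.
right; move: IH; case: K K0 => [|K] // _ IH /=.
exists [:: b], [::]; split => //; first exact: IH.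
apply: SubG_nilP => _; exact: Des_nil.
Qed.

Lemma rem_cat_in (x : nat) s t : x \in s -> rem x (s ++ t) = rem x s ++ t.
Proof.
elim: s => [|b s IH] //= xs; case: eqP => // ne; rewrite IH //.
by move: xs; rewrite inE; case/orP => // /eqP e; case: ne.
Qed.

Lemma perm_rem_cat (x : nat) d D dr : x \in D -> perm_eq d (D ++ dr) ->
  perm_eq (rem x d) (rem x D ++ dr).
Proof. move=> xD /(perm_rem2 x); by rewrite rem_cat_in. Qed.

Lemma perm_single_eq (D : seq nat) a x : perm_eq D [:: a] -> x \in D -> x = a /\ rem x D = [::].
Proof.
move=> pD xD; have : x \in [:: a] by rewrite -(perm_mem pD).
rewrite inE => /eqP ex; split => //; apply: perm_nil_eq.
by have := perm_rem2 x pD; rewrite /= ex eqxx.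
Qed.

Ltac pc := let p := fresh "p" in apply/permP => p;
  repeat match goal with H : _ =1 _ |- _ => move: (H p); clear H end;
  rewrite /= ?count_cat /=; lia.

Lemma Des_step k y a E x : k <= y -> Des k a.+1 E -> x \in E ->
  SubG (fun _ => Des y a) (nseq y a) (rem x E ++ ext x y).
Proof.
move=> ky; elim: a E x => [|a IH] E x.
- case=> [pE|/= h] xE.
    have [-> ->] := perm_single_eq pE xE.
    by apply/SubG_nseq_conv; exact: Sub_refl.
  have [a' [D [gr [dr [e1 e2 e3 e4 e5]]]]] := SubG_extract_r h xE.
  have a'0 : a' = 0.
    have : a' \in nseq k 0 by rewrite (perm_mem e1) mem_head.
    by rewrite mem_nseq => /andP [_ /eqP].
  subst a'.
  have xD0 : perm_eq D [:: 0] by case: e3 => // e; rewrite e in e4.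
  have [ex eD] := perm_single_eq xD0 e4; subst x.
  have kp : 0 < k by have := perm_size e1; rewrite size_nseq /= => ->.
  have ek : perm_eq gr (nseq k.-1 0).
    by move: e1; rewrite -(prednK kp) /= perm_cons perm_sym.
  rewrite /ext cats0.
  apply: (SubG_perm_r (d := dr)).
    by have := perm_rem_cat e4 e2; rewrite eD /= perm_sym.
  apply: (SubG_pad (P := fun _ => Des y 0) (m := k.-1)); first (by move=> ?; right); first by rewrite -ltnS prednK // (leq_trans ky).
  apply: SubG_perm_l ek _; apply: SubG_mono e5 => _ D0 hh; exact: hh.
- case=> [pE|/= h] xE.
    have [-> ->] := perm_single_eq pE xE.
    by apply/SubG_nseq_conv; exact: Sub_refl.
  have [a' [D [gr [dr [e1 e2 e3 e4 e5]]]]] := SubG_extract_r h xE.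
  have a'0 : a' = a.+1.
    have : a' \in nseq k a.+1 by rewrite (perm_mem e1) mem_head.
    by rewrite mem_nseq => /andP [_ /eqP].
  subst a'.
  have kp : 0 < k by have := perm_size e1; rewrite size_nseq /= => ->.
  have ek : perm_eq gr (nseq k.-1 a.+1).
    by move: e1; rewrite -(prednK kp) /= perm_cons perm_sym.
  have hD : Des y a.+1 (rem x D ++ ext x y).
    by right; apply: IH.
  apply: (SubG_perm_r (d := (rem x D ++ ext x y) ++ dr)).
    by move: (perm_rem_cat e4 e2) => /permP H; pc.
  apply: (SubG_pad (P := fun _ => Des y a.+1) (m := k.-1.+1)); first (by move=> ?; exact: Des_nil); first by rewrite prednK.
  exists (rem x D ++ ext x y), dr; split => //.
  apply: SubG_perm_l ek _; apply: SubG_mono e5 => _ D' h'; exact: (@Des_mono k y a.+1 D' ky h').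
Qed.

Definition minl (s : seq nat) := head 0 (sort leq s).
Definition fundM (s : seq nat) (y : nat) := rem (minl s) s ++ ext (minl s) y.

Lemma minl_mem s : s != [::] -> minl s \in s.
Proof.
rewrite /minl; case e: (sort leq s) => [|h r].
  by move: (size_sort leq s); rewrite e; case: s {e}.
by move=> _; rewrite -(mem_sort leq) e mem_head.
Qed.

Lemma minl_le s a : a \in s -> minl s <= a.
Proof.
rewrite /minl -(mem_sort leq); have := sort_sorted leq_total s.
case: (sort leq s) => [|h r] //= srt; rewrite inE; case/orP => [/eqP -> //|ar].
by have /allP := order_path_min leq_trans srt; apply.
Qed.

Lemma Des_case k y m Dm : k <= y -> Des k m Dm -> perm_eq Dm [:: m] \/ SubG (Des y.+1) (ext m y) Dm.
Proof.
move=> ky; case: m => [|m] /= [h|h]; [by left | by right; rewrite h | by left | right].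
apply/SubG_nseq_conv; apply: (SubG_pad (P := fun _ => Des y.+1 m) (m := k)) => //.
  by move=> ?; exact: Des_nil.
apply: SubG_mono h => _ D' h'; apply: (@Des_mono k) => //; exact: leqW.
Qed.

Lemma Tstep k y g d x : k <= y -> SubG (Des k) g d -> x \in d ->
  SubG (Des y.+1) (fundM g y) (rem x d ++ ext x y).
Proof.
move=> ky h xd.
have [a [D [gr [dr [e1 e2 e3 e4 e5]]]]] := SubG_extract_r h xd.
have ag : a \in g by rewrite (perm_mem e1) mem_head.
have gn : g != [::] by case: (g) ag.
have rd := perm_rem_cat e4 e2.
rewrite /fundM; set m := minl g.
have mg : m \in g by exact: minl_mem.
have ma : m <= a by exact: minl_le.
case: (ltnP m a) => [lt_ma | le_am].
-
  have mgr : m \in gr.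
    by move: mg; rewrite (perm_mem e1) inE; case/orP => // /eqP e; move: lt_ma; rewrite e ltnn.
  have [Dm [drr [f1 f2 f3]]] := SubG_extract_l e5 mgr.
  have rg : perm_eq (rem m g) (a :: rem m gr).
    have := perm_rem2 m e1; rewrite /=; case: eqP => // e; by move: lt_ma; rewrite e ltnn.
  case: a lt_ma e1 e2 e3 e4 e5 ag ma rg => [|a] // lt_ma e1 e2 e3 e4 e5 ag ma rg.
  have hU := Des_step ky e3 e4.
  have hU' : SubG (Des y.+1) (nseq y a) (rem x D ++ ext x y).
    apply/SubG_nseq_conv; apply: SubG_mono hU => _ D' h'; apply: (@Des_mono y) => //.
  case: (Des_case ky f2) => [pm|sm].
  + apply: (SubG_perm_l (g := a.+1 :: (rem m gr ++ ext m y))).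
      by move/permP: rg => H; pc.
    apply: (SubG_perm_r (d := ([:: m] ++ (rem x D ++ ext x y)) ++ (drr ++ [::]))).
      by move/permP: rd => H1; move/permP: f1 => H2; move/permP: pm => H3; pc.
    exists ([:: m] ++ (rem x D ++ ext x y)), (drr ++ [::]); split => //.
      right; exists [:: m], (rem x D ++ ext x y); split => //.
        by apply: Des_single; rewrite // -ltnS.
      by apply/SubG_nseq_conv.
    apply: SubG_cat; first by apply: Sub_mono f3; exact: leqW.
    by apply: SubG_nilP => ?; exact: Des_nil.
  + apply: (SubG_perm_l (g := a.+1 :: (rem m gr ++ ext m y))).
      by move/permP: rg => H; pc.
    apply: (SubG_perm_r (d := (rem x D ++ ext x y) ++ (drr ++ Dm))).
      by move/permP: rd => H1; move/permP: f1 => H2; pc.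
    exists (rem x D ++ ext x y), (drr ++ Dm); split => //.
      right; apply/SubG_nseq_conv.
      by apply: (SubG_pad (m := y)) => // ?; exact: Des_nil.
    apply: SubG_cat => //; apply: Sub_mono f3; exact: leqW.
- have ema : m = a by apply/eqP; rewrite eqn_leq ma le_am.
  have rg : perm_eq (rem m g) gr.
    by have := perm_rem2 m e1; rewrite /= ema eqxx.
  rewrite ema in rg *.
  case: a ema e1 e2 e3 e4 e5 ag ma rg le_am => [|a] ema e1 e2 e3 e4 e5 ag ma rg le_am.
  + have xD0 : perm_eq D [:: 0] by case: e3 => // e; rewrite e in e4.
    have [ex eD] := perm_single_eq xD0 e4; subst x.
    rewrite /ext !cats0; apply: (SubG_perm_l (g := gr)); first by rewrite perm_sym.
    apply: (SubG_perm_r (d := dr)); first by move: rd; rewrite eD /= perm_sym.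
    apply: Sub_mono e5; exact: (leq_trans ky).
  + have hU := Des_step ky e3 e4.
    have hU' : SubG (Des y.+1) (nseq y a) (rem x D ++ ext x y).
      apply/SubG_nseq_conv; apply: SubG_mono hU => _ D' h'; apply: (@Des_mono y) => //.
    apply: (SubG_perm_l (g := gr ++ nseq y a)).
      by move/permP: rg => H; pc.
    apply: (SubG_perm_r (d := dr ++ (rem x D ++ ext x y))).
      by move/permP: rd => H1; pc.
    apply: SubG_cat => //; apply: Sub_mono e5; exact: (leq_trans ky).
Qed.

Definition L (s : seq nat) (X : seq nat) := large (sort geq s) X.

Lemma geq_tr : transitive geq.
Proof. by move=> a b c /= h1 h2; exact: leq_trans h2 h1. Qed.
Lemma geq_tot : total geq.
Proof. by move=> a b /=; rewrite leq_total. Qed.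
Lemma geq_anti : antisymmetric geq.
Proof. by move=> a b /= h; apply/eqP; rewrite eqn_leq andbC. Qed.

Lemma large_nil X : large [::] X.
Proof. by rewrite /large; elim: X. Qed.

Lemma L_nil X : L [::] X.
Proof. exact: large_nil. Qed.

Lemma L_nil' s X : s = [::] -> L s X.
Proof. move=> ->; exact: L_nil. Qed.

Lemma sort_geq_eq s t : sorted geq t -> perm_eq s t -> sort geq s = t.
Proof.
move=> st pst; rewrite -[RHS](sorted_sort geq_tr st).
by apply/(perm_sortP geq_tot geq_tr geq_anti).
Qed.

Lemma sorted_geq_nseq y e : sorted geq (nseq y e).
Proof. by elim: y => [|[|y] IH] //=; rewrite leqnn. Qed.

Lemma fund_sort s y : s != [::] -> fund (sort geq s) y = sort geq (fundM s y).
Proof.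
move=> sn.
have r1 : rev (sort geq s) = sort leq s.
  rewrite -(sorted_sort leq_trans (s := rev (sort geq s))).
    apply/(perm_sortP leq_total leq_trans anti_leq).
    by rewrite perm_rev perm_sort.
  by rewrite rev_sorted; exact: (sort_sorted geq_tot).
have ss := sort_sorted leq_total s.
have ps : perm_eq s (sort leq s) by rewrite perm_sym perm_sort.
rewrite /fund r1 /fundM /minl.
move: ss ps; case e: (sort leq s) => [|h r].
  by move: (size_sort leq s); rewrite e; case: s sn {e r1}.
move=> /= ss ps.
have hr : all (leq h) r by exact: order_path_min leq_trans ss.
have sr : sorted geq (rev r) by rewrite rev_sorted; exact: path_sorted ss.
have prr : perm_eq (rem h s) (rev r).
  have := perm_rem2 h ps; rewrite /= eqxx => H; apply: (perm_trans H).
  by rewrite perm_sym perm_rev.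
clear e; case: h ss ps hr prr => [|e0] ss ps hr prr.
  by rewrite /ext cats0; apply/esym/sort_geq_eq.
apply/esym/sort_geq_eq; last by rewrite perm_cat2r.
rewrite sorted_pairwise; last exact: geq_tr.
rewrite pairwise_cat -!sorted_pairwise ?sr ?sorted_geq_nseq ?andbT; try exact: geq_tr.
apply/allrelP => a b; rewrite mem_rev mem_nseq => ar /andP [_ /eqP ->] /=.
by have /allP := hr; move/(_ a ar); apply: leq_trans.
Qed.

Lemma L_cons s y Y : s != [::] -> L s (y :: Y) = L (fundM s y) Y.
Proof. by move=> sn; rewrite /L /large /= fund_sort. Qed.

Lemma L_nilX s : L s [::] -> s = [::].
Proof.
rewrite /L /large /= => /eqP e; move: (size_sort geq s); rewrite e.
by case: s {e}.
Qed.

Lemma flat_set (bs : seq (seq nat)) i s : i < size bs -> exists R,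
  perm_eq (flatten bs) (nth [::] bs i ++ R) /\ perm_eq (flatten (set_nth [::] bs i s)) (s ++ R).
Proof.
elim: bs i => [|b bs IH] [|i] //= hi.
  by exists (flatten bs).
have [R [h1 h2]] := IH i hi; exists (b ++ R); split.
  by move/permP: h1 => H; pc.
by move/permP: h2 => H; pc.
Qed.

Lemma nil_idx (bs : seq (seq nat)) : has (fun b => b == [::]) bs ->
  exists2 i, i < size bs & nth [::] bs i = [::].
Proof.
move/hasP => [b bin /eqP eb]; exists (index b bs); first by rewrite index_mem.
by rewrite nth_index.
Qed.

Lemma Gph X : sorted ltn X -> forall k g (bs : seq (seq nat)) (f : nat -> nat),
  0 < size bs -> (forall x, x \in X -> k <= x /\ f x < size bs) ->
  SubG (Des k) g (flatten bs) -> L g X ->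
  exists2 i, i < size bs & L (nth [::] bs i) [seq x <- X | f x == i].
Proof.
elim: X => [|y X IH] sX k g bs f bs0 hX hS hL;
  (case: (boolP (has (fun b => b == [::]) bs)) => hb;
   [have [i0 il e0] := nil_idx hb; exists i0 => //; rewrite e0; exact: L_nil | ]).
  move: hb; have eg := L_nilX hL; subst g; move: hS => /= hf.
  clear hX; case: bs bs0 hf => [|b bs] //= _ hf.
  by have -> : b = [::] by case: b hf.
have [ky fy] := hX y (mem_head _ _).
set i := f y in fy *.
set bi := nth [::] bs i.
have bin : bi != [::].
  apply/negP => /eqP e; move/hasP: hb; apply; exists bi => //; first exact: mem_nth.
  by rewrite e.
set xm := minl bi.
have xb : xm \in bi by exact: minl_mem.
have [R [h1 h2]] := flat_set (fundM bi y) fy.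
have xd : xm \in flatten bs by rewrite (perm_mem h1) mem_cat xb.
have hT := Tstep ky hS xd.
have gn : g != [::] by apply/negP => /eqP e; move: hS; rewrite e /= => e2; rewrite e2 in xd.
rewrite L_cons // in hL.
set bs' := set_nth [::] bs i (fundM bi y).
have sz : size bs' = size bs by rewrite size_set_nth; apply/maxn_idPr.
have sX' : sorted ltn X := path_sorted sX.
have hyX : all (ltn y) X := order_path_min ltn_trans sX.
have bs0' : 0 < size bs' by rewrite sz.
have hX' : forall x, x \in X -> y.+1 <= x /\ f x < size bs'.
  move=> x xX; split; first exact: (allP hyX x xX).
  by rewrite sz; have := hX x; rewrite inE xX orbT => /(_ isT) [].
have hS' : SubG (Des y.+1) (fundM g y) (flatten bs').
  apply: SubG_perm_r hT.
  have := perm_rem_cat xb h1; move/permP => H1; move: h2; rewrite /fundM -/xm; move/permP => H2; rewrite /bs' /fundM -/xm; pc.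
have [j jl hj] := IH sX' y.+1 (fundM g y) bs' f bs0' hX' hS' hL.
exists j; first by rewrite -sz.
move: hj; rewrite /bs' nth_set_nth /=.
case: (eqVneq j i) => [->|ne] hj.
  by rewrite L_cons.
by [].
Qed.

Lemma code_bound (Q : nat -> nat -> nat) c s y :
  (forall x, x \in s -> Q x y < c) -> foldr (fun x acc => Q x y + c * acc) 0 s < c ^ size s.
Proof.
elim: s => [|a s IH] //= sub.
have hq : Q a y < c by apply: sub; rewrite mem_head.
have hs' : foldr (fun x acc => Q x y + c * acc) 0 s < c ^ size s.
  by apply: IH => z zs; apply: sub; rewrite inE zs orbT.
rewrite expnS; set A := foldr _ _ _ in hs' *.
apply: (@leq_trans (c * A.+1)); last exact: leq_mul.
rewrite mulnS; move: (c * A) => t; lia.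
Qed.

Lemma code_inj (Q : nat -> nat -> nat) c s y1 y2 :
  (forall x, x \in s -> Q x y1 < c /\ Q x y2 < c) ->
  foldr (fun x acc => Q x y1 + c * acc) 0 s = foldr (fun x acc => Q x y2 + c * acc) 0 s ->
  forall x, x \in s -> Q x y1 = Q x y2.
Proof.
elim: s => [|a s IH] //= sub E x.
have [hq hq'] := sub a (mem_head _ _).
have c0 : 0 < c by case: (c) hq.
have E1 := congr1 (modn^~ c) E; have E2 := congr1 (divn^~ c) E.
move: E1 E2; rewrite /= ![_ + c * _]addnC ![c * _]mulnC !modnMDl !divnMDl //.
rewrite !modn_small // !divn_small // !addn0 => e1 e2.
rewrite inE; case/orP => [/eqP -> //|xs].
by apply: IH => // z zs; apply: sub; rewrite inE zs orbT.
Qed.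

Lemma homog n X c Xb (Q : nat -> nat -> nat) :
  is_fin_set X -> large (omega_pow n.+1) X -> 4 ^ (c ^ 2) <= head 0 X -> size Xb <= c ->
  (forall x y, x \in Xb -> y \in X -> Q x y < c) ->
  exists Y : seq nat, [/\ is_fin_set Y, {subset Y <= X}, large (omega_pow n) Y &
    forall x y y', x \in Xb -> y \in Y -> y' \in Y -> Q x y = Q x y'].
Proof.
case: X => [|x0 rest] sX hl hc hs hQ; first by rewrite /large /= in hl.
set code := fun y => foldr (fun x acc => Q x y + c * acc) 0 Xb.
have cb : forall y, y \in x0 :: rest -> code y < c ^ size Xb.
  move=> y yX; apply: code_bound => x xb; exact: hQ.
have cinj : forall y y', y \in x0 :: rest -> y' \in x0 :: rest -> code y = code y' ->
    forall x, x \in Xb -> Q x y = Q x y'.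
  move=> y1 y2 yX y'X E; apply: code_inj E => x xb; split; exact: hQ.
have cx : c ^ size Xb <= x0.
  apply: leq_trans hc.
  case: (posnP (size Xb)) => [->|sp]; first by rewrite expn0 expn_gt0.
  have c0 : 0 < c by apply: leq_trans hs.
  apply: (leq_trans (leq_pexp2l c0 hs)).
  have : c ^ c <= (4 ^ c) ^ c by rewrite leq_exp2r // ltnW // ltn_expl.
  by rewrite -expnM mulnn.
have fl : flatten (nseq x0 [:: n]) = nseq x0 n by elim: (x0) => //= m ->.
have hl' : L (nseq x0 n) rest.
  rewrite /L (sorted_sort geq_tr (sorted_geq_nseq _ _)).
  by move: hl; rewrite /large /omega_pow /= /fund /=.
have b0 : 0 < size (nseq x0 [:: n]) by rewrite size_nseq; apply: leq_trans hc; rewrite expn_gt0.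
have hX : forall x, x \in rest -> 0 <= x /\ code x < size (nseq x0 [:: n]).
  move=> x xr; split => //; rewrite size_nseq; apply: leq_trans (cb x _) cx.
  by rewrite inE xr orbT.
have hS : SubG (Des 0) (nseq x0 n) (flatten (nseq x0 [:: n])) by rewrite fl; exact: Sub_refl.
have [i il hi] := @Gph rest (path_sorted sX) 0 (nseq x0 n) (nseq x0 [:: n]) code b0 hX hS hl'.
exists [seq x <- rest | code x == i]; split.
- exact: (sorted_filter ltn_trans _ (path_sorted sX)).
- by move=> z; rewrite mem_filter => /andP [_ zr]; rewrite inE zr orbT.
- move: hi; rewrite size_nseq in il; rewrite nth_nseq il /L.
  by rewrite (sorted_sort geq_tr (s := [:: n])).
- move=> x y y' xb; rewrite !mem_filter => /andP [/eqP cy yr] /andP [/eqP cy' y'r].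
  apply: (cinj y y') => //; [by rewrite inE yr orbT | by rewrite inE y'r orbT | by rewrite cy cy'].
Qed.

Theorem mainTheorem17 (n : nat) (X : seq nat) (c : nat) :
  is_fin_set X ->
  large (omega_pow n.+1) X ->
  sparse (omega_pow 3) X ->
  4 ^ (c ^ 2) <= head 0 X ->
  (forall (Xb : seq nat) (P : nat -> nat -> nat),
     is_fin_set Xb -> size Xb <= c ->
     (forall x y, x \in Xb -> y \in X -> x < y) ->
     (forall x y, x \in Xb ++ X -> y \in Xb ++ X -> x < y -> P x y < c) ->
     exists Y : seq nat,
       [/\ is_fin_set Y, {subset Y <= X}, large (omega_pow n) Y &
        forall x y y', x \in Xb -> y \in Y -> y' \in Y -> P x y = P x y'])
  /\
  (forall (Xb : seq nat) (P : nat -> nat -> nat),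
     is_fin_set Xb -> size Xb <= c ->
     (forall y x, y \in X -> x \in Xb -> y < x) ->
     (forall x y, x \in X ++ Xb -> y \in X ++ Xb -> x < y -> P x y < c) ->
     exists Y : seq nat,
       [/\ is_fin_set Y, {subset Y <= X}, large (omega_pow n) Y &
        forall x y y', x \in Xb -> y \in Y -> y' \in Y -> P y x = P y' x]).
Proof.
move=> sX hl _ hc; split.
- move=> Xb P _ hs hlt hP; apply: (homog (c := c) (Q := P)) => // x y xb yX.
  by apply: hP; rewrite ?mem_cat ?xb ?yX ?orbT //; exact: hlt.
- move=> Xb P _ hs hlt hP; apply: (homog (c := c) (Q := fun x y => P y x)) => // x y xb yX.
  by apply: hP; rewrite ?mem_cat ?xb ?yX ?orbT //; exact: hlt.
Qed.
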